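(* Let $K$ be a positive commutative semiring with its natural (pre)order $\leq$, let $A$ be a finite set, and let $\mathbb{X}$ be a $K$-team with domain $V=\{x_1<\dots<x_k\}$ and values in $A$. Let $\pi$ be a $K$-interpretation over $A$ for the $k$-ary symbol $R$ with $\pi(R(\vec a_s))=\mathbb{X}(s)$ for every $s\in\mathrm{As}(V,A)$. Let $\phi$ be a sentence over $\{R\}$. (i) If $\phi\in\mathrm{FO}(=,\neq\!\bot,\leq)$ and $[\![\phi]\!]_\pi\neq 0$ (i.e. $\mathbb{X}$ satisfies the atom defined by $\phi$), then $[\![\phi]\!]_{\chi_K\circ\pi}\neq0$, i.e. the possibilistic collapse $\chi_K\circ\mathbb{X}$ satisfies that atom. (ii) If $\phi\in\mathrm{FO}(\bot?,\neq,\not\leq)$ and $[\![\phi]\!]_{\chi_K\circ\pi}\neq0$, then $[\![\phi]\!]_\pi\neq0$.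
   Context: Commutative semiring $(K,+,\cdot,0,1)$. It is positive if $a+b=0$ implies $a=b=0$, and $ab=0$ implies $a=0$ or $b=0$. The natural order is $a\leq b$ iff $\exists c:\,a+c=b$. $\mathbb{B}$ is the Boolean semiring $(\{0,1\},\vee,\wedge,0,1)$, ordered by $0<1$. $\chi_K\colon K\to\mathbb{B}$ maps $0\mapsto0$ and nonzero elements to $1$. $K$-teams: $\mathrm{As}(V,A)$ is the set of assignments $s\colon V\to A$. A $K$-team is a function $\mathbb{X}\colon\mathrm{As}(V,A)\to K$. For a fixed total order $x_1<\dots<x_k$ of $V$, $\vec a_s=(s(x_1),\dots,s(x_k))$. The possibilistic collapse of $\mathbb{X}$ is the $\mathbb{B}$-team $\chi_K\circ\mathbb{X}$. An atom $\alpha$ is interpreted on $\mathbb{X}$ as $[\![\alpha]\!]_{\mathbb{X}}:=[\![\phi_\alpha]\!]_{\pi_{\mathbb{X}}}$ for a defining sentence $\phi_\alpha$ over $\{R\}$, where $\pi_{\mathbb{X}}$ maps $R(\vec a_s)$ to $\mathbb{X}(s)$. $\mathbb{X}$ satisfies $\alpha$ if this value is nonzero. The atom is $\mathcal L$-definable if $\phi_\alpha\in\mathcal L$. A $K$-interpretation maps facts and negated facts over $A$ to $K$. It is extended to formulae under assignments as follows: - literals get their $\pi$-values; - $x=y$ and $x\neq y$ get $1$ or $0$ according to their truth; - $\wedge$ is product and $\vee$ is sum; - $\forall$ is the product and $\exists$ the sum over $A$; - $\neg$ is evaluated via negation normal form. A formula (in)equality $\phi*\psi$ has value $1$ if $[\![\phi]\!]*[\![\psi]\!]$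 holds in the semiring, and $0$ otherwise. $\bot$ is a formula of constant value $0$. $\mathrm{FO}(=,\neq\!\bot,\leq)$ (resp. $\mathrm{FO}(\bot?,\neq,\not\leq)$) consists of the formulae built from first-order literals and formula (in)equalities of the forms $\phi=\psi$, $\phi\neq\bot$, $\phi\leq\psi$ (resp. $\phi=\bot$, $\phi\neq\psi$, $\phi\not\leq\psi$) between first-order formulae $\phi,\psi$, using $\wedge,\vee,\forall,\exists$ (positive occurrence, no nesting). *)

(* Defs.v *)
From HB Require Import structures.
From mathcomp Require Import all_boot all_order all_algebra.
From Stdlib Require Import ClassicalEpsilon.

Set Implicit Arguments.
Unset Strict Implicit.
Unset Printing Implicit Defensive.

Import GRing.Theory.
Local Open Scope ring_scope.

(* Positive commutative semiring (K is a comNzSemiRingType, so 0 <> 1). *)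
Definition positive_semiring (K : comNzSemiRingType) : Prop :=
  (forall a b : K, a + b = 0 -> a = 0 /\ b = 0) /\
  (forall a b : K, a * b = 0 -> a = 0 \/ b = 0).

Definition nat_le (K : comNzSemiRingType) (a b : K) : Prop :=
  exists c : K, a + c = b.

(* The Boolean semiring B = ({0,1}, \/, /\, 0, 1), as an alias of bool
   (bool itself carries the field F_2 structure in MathComp). *)
Definition boolB : Type := bool.
HB.instance Definition _ := Finite.on boolB.
HB.instance Definition _ := GRing.isNmodule.Build boolB orbA orbC orFb.
Lemma boolB_oner_neq0 : (true : boolB) != false. Proof. by []. Qed.
HB.instance Definition _ := GRing.Nmodule_isComNzSemiRing.Build boolB
  andbA andbC andTb andb_orl andFb boolB_oner_neq0.

Definition chi (K : comNzSemiRingType) (a : K) : boolB := a != 0.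

Definition truthval (K : comNzSemiRingType) (P : Prop) : K :=
  if excluded_middle_informative P then 1 else 0.

(* Variables are natural numbers. First-order formulae are taken in   *)
(* negation normal form (negation is evaluated via NNF anyway).       *)

Inductive fo (k : nat) : Type :=
  | FRel   of k.-tuple nat
  | FNRel  of k.-tuple nat
  | FEq    of nat & nat
  | FNeq   of nat & nat
  | FAnd   of fo k & fo k
  | FOr    of fo k & fo k
  | FAll   of nat & fo k
  | FEx    of nat & fo k.

Inductive cmp_kind : Type :=
  | CEq
  | CNeqBot    (* phi <> bot, psi ignored *)
  | CLe
  | CEqBot     (* phi = bot, psi ignored *)
  | CNeq
  | CNotLe.

Inductive xfo (k : nat) : Type :=
  | XLit  of fo k                        (* first-order literal (checked below) *)
  | XCmp  of cmp_kind & fo k & fo k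
  | XAnd  of xfo k & xfo k
  | XOr   of xfo k & xfo k
  | XAll  of nat & xfo k
  | XEx   of nat & xfo k.

Definition is_literal k (f : fo k) : bool :=
  match f with FRel _ | FNRel _ | FEq _ _ | FNeq _ _ => true | _ => false end.

Fixpoint in_fragment k (ok : cmp_kind -> bool) (phi : xfo k) : bool :=
  match phi with
  | XLit f => is_literal f
  | XCmp c _ _ => ok c
  | XAnd p q | XOr p q => in_fragment ok p && in_fragment ok q
  | XAll _ p | XEx _ p => in_fragment ok p
  end.

Definition frag1 (c : cmp_kind) : bool :=
  match c with CEq | CNeqBot | CLe => true | _ => false end.
Definition frag2 (c : cmp_kind) : bool :=
  match c with CEqBot | CNeq | CNotLe => true | _ => false end.

Fixpoint fo_fv k (f : fo k) : seq nat :=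
  match f with
  | FRel y | FNRel y => val y
  | FEq x y | FNeq x y => [:: x; y]
  | FAnd p q | FOr p q => fo_fv p ++ fo_fv q
  | FAll x p | FEx x p => filter (predC1 x) (fo_fv p)
  end.

Fixpoint xfo_fv k (phi : xfo k) : seq nat :=
  match phi with
  | XLit f => fo_fv f
  | XCmp _ f g => fo_fv f ++ fo_fv g
  | XAnd p q | XOr p q => xfo_fv p ++ xfo_fv q
  | XAll x p | XEx x p => filter (predC1 x) (xfo_fv p)
  end.

Definition sentence k (phi : xfo k) : Prop := xfo_fv phi = [::].

(* A K-interpretation over A for the k-ary symbol R: values of the
   facts R(a) and of the negated facts not R(a), a in A^k. *)
Record interp (K : comNzSemiRingType) (A : finType) (k : nat) := Interp {
  ipos : k.-tuple A -> K;
  ineg : k.-tuple A -> K }.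

Definition collapse_interp (K : comNzSemiRingType) (A : finType) k
  (pi : interp K A k) : interp boolB A k :=
  Interp (fun a => chi (ipos pi a)) (fun a => chi (ineg pi a)).

Definition env (A : finType) := nat -> option A.

Definition upd (A : finType) (g : env A) (x : nat) (a : A) : env A :=
  fun y => if y == x then Some a else g y.

Definition fact_of (A : finType) k (g : env A) (y : k.-tuple nat)
  : option (k.-tuple A) := insub (pmap g (val y)).

Definition eqval (K : comNzSemiRingType) (A : finType) (g : env A) (x y : nat)
  (b : bool) : K :=
  match g x, g y with
  | Some a, Some c => truthval K ((a == c) = b)
  | _, _ => 0
  end.

Fixpoint fo_eval (K : comNzSemiRingType) (A : finType) k (pi : interp K A k)
  (g : env A) (f : fo k) : K :=
  match f with
  | FRel y => if fact_of g y is Some a then ipos pi a else 0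
  | FNRel y => if fact_of g y is Some a then ineg pi a else 0
  | FEq x y => eqval K g x y true
  | FNeq x y => eqval K g x y false
  | FAnd p q => fo_eval pi g p * fo_eval pi g q
  | FOr p q => fo_eval pi g p + fo_eval pi g q
  | FAll x p => \prod_(a : A) fo_eval pi (upd g x a) p
  | FEx x p => \sum_(a : A) fo_eval pi (upd g x a) p
  end.

Definition cmp_holds (K : comNzSemiRingType) (c : cmp_kind) (u v : K) : Prop :=
  match c with
  | CEq => u = v
  | CNeqBot => u <> 0
  | CLe => nat_le u v
  | CEqBot => u = 0
  | CNeq => u <> v
  | CNotLe => ~ nat_le u v
  end.

Fixpoint xfo_eval (K : comNzSemiRingType) (A : finType) k (pi : interp K A k)
  (g : env A) (phi : xfo k) : K :=
  match phi with
  | XLit f => fo_eval pi g f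
  | XCmp c f h => truthval K (cmp_holds c (fo_eval pi g f) (fo_eval pi g h))
  | XAnd p q => xfo_eval pi g p * xfo_eval pi g q
  | XOr p q => xfo_eval pi g p + xfo_eval pi g q
  | XAll x p => \prod_(a : A) xfo_eval pi (upd g x a) p
  | XEx x p => \sum_(a : A) xfo_eval pi (upd g x a) p
  end.

Definition sem (K : comNzSemiRingType) (A : finType) k (pi : interp K A k)
  (phi : xfo k) : K := xfo_eval pi (fun _ => None) phi.

(* V = {x_1 < ... < x_k} is represented by 'I_k with its natural order;
   As(V,A) = {ffun 'I_k -> A}; a K-team is a map As(V,A) -> K. *)
Definition team (K : comNzSemiRingType) (A : finType) (k : nat) :=
  {ffun 'I_k -> A} -> K.

Definition avec (A : finType) k (s : {ffun 'I_k -> A}) : k.-tuple A :=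
  [tuple s i | i < k].

(* Main.v *)
Require Import Defs.
From mathcomp Require Import all_boot all_order all_algebra.
From Stdlib Require Import ClassicalEpsilon.

Set Implicit Arguments.
Unset Strict Implicit.
Import GRing.Theory.
Local Open Scope ring_scope.

Section Aux.
Variable K : comNzSemiRingType.
Hypothesis HK : positive_semiring K.

Lemma chi0 : chi (0 : K) = 0. Proof. by rewrite /chi eqxx. Qed.
Lemma chi1 : chi (1 : K) = 1. Proof. by rewrite /chi oner_neq0. Qed.
Lemma chiD (a b : K) : chi (a + b) = chi a + chi b.
Proof.
rewrite /chi; case: HK => Hp _.
case: (eqVneq (a + b) 0) => [/Hp [-> ->]|H]; first by rewrite eqxx.
case: (eqVneq a 0) => [Ea|//]; case: (eqVneq b 0) => [Eb|//].
by move: H; rewrite Ea Eb addr0 eqxx.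
Qed.
Lemma chiM (a b : K) : chi (a * b) = chi a * chi b.
Proof.
rewrite /chi; case: HK => _ Hm.
case: (eqVneq (a * b) 0) => [/Hm [->|->]|H].
- by rewrite eqxx.
- by rewrite eqxx; case: (a != 0).
case: (eqVneq a 0) => [Ea|_]; first by move: H; rewrite Ea mul0r eqxx.
case: (eqVneq b 0) => [Eb|//]; by move: H; rewrite Eb mulr0 eqxx.
Qed.
Lemma chi_sum (A : finType) (F : A -> K) : chi (\sum_a F a) = \sum_a chi (F a).
Proof. exact: (big_morph _ chiD chi0). Qed.
Lemma chi_prod (A : finType) (F : A -> K) : chi (\prod_a F a) = \prod_a chi (F a).
Proof. exact: (big_morph _ chiM chi1). Qed.
Lemma chi_truth (P : Prop) : chi (truthval K P) = truthval boolB P.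
Proof. rewrite /truthval; case: (excluded_middle_informative P) => H; [exact: chi1|exact: chi0]. Qed.

Lemma chi_fo (A : finType) k (pi : interp K A k) (f : fo k) g :
  chi (fo_eval pi g f) = fo_eval (collapse_interp pi) g f.
Proof.
elim: f g => [y|y|x y|x y|p IHp q IHq|p IHp q IHq|x p IHp|x p IHp] g /=.
- by case: fact_of => [a|]; rewrite ?chi0.
- by case: fact_of => [a|]; rewrite ?chi0.
- by rewrite /eqval; case: (g x) => [a|]; case: (g y) => [c|]; rewrite ?chi0 ?chi_truth.
- by rewrite /eqval; case: (g x) => [a|]; case: (g y) => [c|]; rewrite ?chi0 ?chi_truth.
- by rewrite chiM IHp IHq.
- by rewrite chiD IHp IHq.
- by rewrite chi_prod; apply: eq_bigr => a _; rewrite IHp.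
- by rewrite chi_sum; apply: eq_bigr => a _; rewrite IHp.
Qed.

Lemma natle_chi (u v : K) : nat_le u v -> nat_le (chi u) (chi v).
Proof. by case=> c <-; exists (chi c); rewrite chiD. Qed.

End Aux.

Lemma truthP (P : Prop) : reflect P (truthval boolB P : bool).
Proof. by rewrite /truthval; case: (excluded_middle_informative P) => H; constructor. Qed.

Lemma sumB_imp (A : finType) (F G : A -> boolB) :
  (forall a, (F a : bool) ==> G a) -> ((\sum_a F a : boolB) : bool) ==> (\sum_a G a : boolB).
Proof.
move=> H; apply: (big_ind2 (fun x y : boolB => (x : bool) ==> y)) => //.
by move=> [] [] [] [].
Qed.
Lemma prodB_imp (A : finType) (F G : A -> boolB) :
  (forall a, (F a : bool) ==> G a) -> ((\prod_a F a : boolB) : bool) ==> (\prod_a G a : boolB).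
Proof.
move=> H; apply: (big_ind2 (fun x y : boolB => (x : bool) ==> y)) => //.
by move=> [] [] [] [].
Qed.

Theorem mainTheorem5 (K : comNzSemiRingType) (A : finType) (k : nat)
  (X : team K A k) (pi : interp K A k) (phi : xfo k) :
  positive_semiring K ->
  (forall s : {ffun 'I_k -> A}, ipos pi (avec s) = X s) ->
  sentence phi ->
  (in_fragment frag1 phi ->
     sem pi phi <> 0%R -> sem (collapse_interp pi) phi <> 0%R) /\
  (in_fragment frag2 phi ->
     sem (collapse_interp pi) phi <> 0%R -> sem pi phi <> 0%R).
Proof.
move=> HK _ _.
have truthK : forall P : Prop, chi (truthval K P) = truthval boolB P.
  by move=> P; rewrite chi_truth.
have nz : forall (u : K), u <> 0 <-> chi u.
  by move=> u; rewrite /chi; split => [/eqP|/eqP].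
have nzB : forall (u : boolB), u <> 0 <-> (u : bool).
  by case; split.
split.
- have gen : forall g, in_fragment frag1 phi ->
    (chi (xfo_eval pi g phi) : bool) ==> xfo_eval (collapse_interp pi) g phi.
    elim: phi => [f|c f h|p IHp q IHq|p IHp q IHq|x p IHp|x p IHp] g /=.
    + by move=> _; rewrite chi_fo //; apply/implyP.
    + rewrite truthK.
      case: c => //= _; apply/implyP => /truthP H; apply/truthP.
      * by rewrite -!chi_fo // H.
      * by rewrite -chi_fo //; move/nz: H; case: (chi _).
      * by rewrite -!chi_fo //; apply: natle_chi.
    + move=> /andP[Hp Hq]; rewrite chiM //.
      move: (IHp g Hp) (IHq g Hq).
      by case: (chi _); case: (chi _); case: (xfo_eval _ _ p); case: (xfo_eval _ _ q).
    + move=> /andP[Hp Hq]; rewrite chiD //.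
      move: (IHp g Hp) (IHq g Hq).
      by case: (chi _); case: (chi _); case: (xfo_eval _ _ p); case: (xfo_eval _ _ q).
    + by move=> Hp; rewrite chi_prod //; apply: prodB_imp => a; apply: IHp.
    + by move=> Hp; rewrite chi_sum //; apply: sumB_imp => a; apply: IHp.
  move=> Hf /nz H; apply/nzB; rewrite /sem.
  by move: (gen (fun _ => None) Hf); rewrite H.
- have gen : forall g, in_fragment frag2 phi ->
    ((xfo_eval (collapse_interp pi) g phi : boolB) : bool) ==> chi (xfo_eval pi g phi).
    elim: phi => [f|c f h|p IHp q IHq|p IHp q IHq|x p IHp|x p IHp] g /=.
    + by move=> _; rewrite chi_fo //; apply/implyP.
    + rewrite truthK.
      case: c => //= _; apply/implyP => /truthP H; apply/truthP.
      * by apply/eqP; move: H; rewrite -chi_fo // /chi => E; apply: negbFE E.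
      * by move=> E; apply: H; rewrite -!chi_fo // E.
      * by move=> E; apply: H; rewrite -!chi_fo //; apply: natle_chi.
    + move=> /andP[Hp Hq]; rewrite chiM //.
      move: (IHp g Hp) (IHq g Hq).
      by case: (chi _); case: (chi _); case: (xfo_eval _ _ p); case: (xfo_eval _ _ q).
    + move=> /andP[Hp Hq]; rewrite chiD //.
      move: (IHp g Hp) (IHq g Hq).
      by case: (chi _); case: (chi _); case: (xfo_eval _ _ p); case: (xfo_eval _ _ q).
    + by move=> Hp; rewrite chi_prod //; apply: prodB_imp => a; apply: IHp.
    + by move=> Hp; rewrite chi_sum //; apply: sumB_imp => a; apply: IHp.
  move=> Hf /nzB H; apply/nz; rewrite /sem.
  move: (gen (fun _ => None) Hf); rewrite /sem in H *; by rewrite H.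
Qed.
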